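(* Consider a Markov decision process with continuous state space $\mathcal{S}$, continuous action space $\mathcal{A}$, transition density $p(\mathbf{s}'|\mathbf{s},\mathbf{a})$ and discount factor $\gamma\in(0,1)$, and let $r_1,r_2$ be bounded reward functions with optimal soft Q-functions (temperature $1$) $Q_1^*, Q_2^*$ and optimal soft policies $\pi_i^*(\mathbf{a}|\mathbf{s})\propto\exp(Q_i^*(\mathbf{s},\mathbf{a}))$. Let $Q_\Sigma=\frac12(Q_1^*+Q_2^* )$, $r_\mathcal{C}=\frac12(r_1+r_2)$, let $Q_\mathcal{C}^*$ be the optimal soft Q-function for $r_\mathcal{C}$, and let $C^*$ be the fixed point of $$C(\mathbf{s},\mathbf{a}) \leftarrow \gamma\, \mathbb{E}_{\mathbf{s}'\sim p(\mathbf{s}'|\mathbf{s},\mathbf{a})}\Big[ D_{1/2}\big(\pi_1^*(\cdot|\mathbf{s}')\,\|\,\pi_2^*(\cdot|\mathbf{s}')\big) + \max_{\mathbf{a}'\in\mathcal{A}} C(\mathbf{s}',\mathbf{a}')\Big].$$ Define $V_\Sigma(\mathbf{s}) = \log\int_{\mathcal{A}}\exp(Q_\Sigma(\mathbf{s},\mathbf{a}))\,d\mathbf{a}$ and $V_\mathcal{C}^*(\mathbf{s}) = \log\int_{\mathcal{A}}\exp(Q_\mathcal{C}^*(\mathbf{s},\mathbf{a}))\,d\mathbf{a}$. Then for all $\mathbf{s}\in\mathcal{S}$, $$V_\Sigma(\mathbf{s}) \ge V_\mathcal{C}^*(\mathbf{s}) \ge V_\Sigma(\mathbf{s}) - \max_{\mathbf{a}}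 C^*(\mathbf{s},\mathbf{a}).$$
   Context: Soft (maximum-entropy) reinforcement learning with temperature $1$: for a bounded reward $r$, the soft Bellman backup maps a bounded $Q$ to $r(\mathbf{s},\mathbf{a}) + \gamma\,\mathbb{E}_{\mathbf{s}'\sim p(\cdot|\mathbf{s},\mathbf{a})}[\log\int_{\mathcal{A}}\exp(Q(\mathbf{s}',\mathbf{a}'))\,d\mathbf{a}']$; the optimal soft Q-function for $r$ is its unique fixed point, and the optimal soft policy is proportional to $\exp$ of it. $D_{1/2}(p\|q) = -2\log\int\sqrt{p q}$ is the Rényi divergence of order $1/2$. *)

(* Defs.v *)
From HB Require Import structures.
From mathcomp Require Import all_boot all_order all_algebra.
From mathcomp Require Import all_classical all_reals all_analysis.
Set Implicit Arguments. Unset Strict Implicit. Unset Printing Implicit Defensive.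
Import Order.TTheory GRing.Theory Num.Theory.
Local Open Scope classical_set_scope.
Local Open Scope ring_scope.

Section SoftRL.
Context {d1 d2 : measure_display} {S : measurableType d1} {A : measurableType d2}
  {R : realType}.

(* reference measure on actions (the "da" of the paper) *)
Variable mu : {measure set A -> \bar R}.
(* reference measure on states, w.r.t. which p(s'|s,a) is a density *)
Variable nu : {measure set S -> \bar R}.

Definition partZ (Q : S -> A -> R) (s : S) : R :=
  Rintegral mu setT (fun a => expR (Q s a)).

Definition softV (Q : S -> A -> R) (s : S) : R := ln (partZ Q s).

Definition softpol (Q : S -> A -> R) (s : S) (a : A) : R :=
  expR (Q s a) / partZ Q s.

Definition expect (p : S -> A -> S -> R) (s : S) (a : A) (f : S -> R) : R :=
  Rintegral nu setT (fun s' => p s a s' * f s').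

Definition soft_backup (p : S -> A -> S -> R) (gamma : R) (r : S -> A -> R)
    (Q : S -> A -> R) (s : S) (a : A) : R :=
  r s a + gamma * expect p s a (softV Q).

Definition renyi_half (P1 P2 : A -> R) : R :=
  - 2 * ln (Rintegral mu setT (fun a => Num.sqrt (P1 a * P2 a))).

(* the backup defining C^* ; max over actions is taken as supremum *)
Definition C_backup (p : S -> A -> S -> R) (gamma : R) (Q1 Q2 : S -> A -> R)
    (C : S -> A -> R) (s : S) (a : A) : R :=
  gamma * expect p s a
    (fun s' => renyi_half (softpol Q1 s') (softpol Q2 s') + sup (range (C s'))).

Definition boundedSA (f : S -> A -> R) : Prop :=
  exists M : R, forall s a, `|f s a| <= M.

Definition measurableSA (f : S -> A -> R) : Prop :=
  measurable_fun setT (fun x : S * A => f x.1 x.2).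

(* Q is the optimal soft Q-function for r: a bounded measurable fixed point of
   the soft Bellman backup (such a fixed point is unique). *)
Definition is_opt_softQ (p : S -> A -> S -> R) (gamma : R) (r Q : S -> A -> R) : Prop :=
  boundedSA Q /\ measurableSA Q /\ (forall s a, Q s a = soft_backup p gamma r Q s a).

Definition transition_density (p : S -> A -> S -> R) : Prop :=
  (forall s a s', 0 <= p s a s') /\
  measurable_fun setT (fun x : (S * A) * S => p x.1.1 x.1.2 x.2) /\
  (forall s a, (\int[nu]_s' (p s a s')%:E = 1)%E).

End SoftRL.

(* Main.v *)
From HB Require Import structures.
From mathcomp Require Import all_boot all_order all_algebra.
From mathcomp Require Import all_classical all_reals all_analysis.
Require Import Defs.
From mathcomp Require Import ring lra measurable_realfun.
Set Implicit Arguments. Unset Strict Implicit. Unset Printing Implicit Defensive.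
Import Order.TTheory GRing.Theory Num.Theory.
Local Open Scope classical_set_scope.
Local Open Scope ring_scope.

Section nm.
Context {d : measure_display} {T : measurableType d} {R : realType}.
Variable mu : {measure set T -> \bar R}.

Lemma nn_le_integral (f g : T -> \bar R) : (forall x, (0 <= f x)%E) ->
  (forall x, (f x <= g x)%E) -> (\int[mu]_x f x <= \int[mu]_x g x)%E.
Proof.
move=> f0 fg.
have g0 x : (0 <= g x)%E by exact: le_trans (f0 x) (fg x).
rewrite !ge0_integralTE //; apply: ereal_sup_le => _ [h hf <-].
by exists h => //= x; exact: le_trans (hf x) (fg x).
Qed.

Lemma Rintegral_le_nm (G F H : T -> R) :
  mu.-integrable setT (EFin \o G) -> mu.-integrable setT (EFin \o H) ->
  (forall x, G x <= F x) -> (forall x, `|F x| <= H x) ->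
  Rintegral mu setT G <= Rintegral mu setT F.
Proof.
move=> iG iH GF FH.
rewrite /Rintegral (integralE _ _ (EFin \o F)) (integralE _ _ (EFin \o G)).
have Gp := integrable_pos_fin_num measurableT iG.
have Gn := integrable_neg_fin_num measurableT iG.
have Hp := integrable_pos_fin_num measurableT iH.
have le1 : (\int[mu]_x (EFin \o G)^\+ x <= \int[mu]_x (EFin \o F)^\+ x)%E.
  apply: nn_le_integral => x; first exact: funepos_ge0.
  have := @funepos_le T R setT (EFin \o G) (EFin \o F).
  by apply => //[y _|]; rewrite ?inE// lee_fin.
have le2 : (\int[mu]_x (EFin \o F)^\+ x <= \int[mu]_x (EFin \o H)^\+ x)%E.
  apply: nn_le_integral => x; first exact: funepos_ge0.
  have := @funepos_le T R setT (EFin \o F) (EFin \o H).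
  by apply => //[y _|]; rewrite ?inE// lee_fin (le_trans (ler_norm _)).
have le3 : (\int[mu]_x (EFin \o F)^\- x <= \int[mu]_x (EFin \o G)^\- x)%E.
  apply: nn_le_integral => x; first exact: funeneg_ge0.
  have := @funeneg_le T R setT (EFin \o G) (EFin \o F).
  by apply => //[y _|]; rewrite ?inE// lee_fin.
have Fp : (\int[mu]_x (EFin \o F)^\+ x)%E \is a fin_num.
  rewrite ge0_fin_numE; last by apply: integral_ge0 => x _; exact: funepos_ge0.
  by apply: le_lt_trans le2 _; rewrite -ge0_fin_numE//; apply: integral_ge0 => x _; exact: funepos_ge0.
have Fn : (\int[mu]_x (EFin \o F)^\- x)%E \is a fin_num.
  rewrite ge0_fin_numE; last by apply: integral_ge0 => x _; exact: funeneg_ge0.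
  by apply: le_lt_trans le3 _; rewrite -ge0_fin_numE//; apply: integral_ge0 => x _; exact: funeneg_ge0.
by apply: (fine_le _ _ (leeB le1 le3)); rewrite ?inE fin_numB ?Gp ?Gn ?Fp ?Fn.
Qed.

End nm.


Lemma bnd_glob {T : Type} {R : realType} (f : T -> R) (M : R) :
  (forall x, `|f x| <= M) -> [bounded f x | x in setT].
Proof.
move=> fM; exists M; split; first by rewrite num_real.
by move=> y My x _; rewrite /= (le_trans (fM x)) // ltW.
Qed.

Section intR.
Context {d : measure_display} {T : measurableType d} {R : realType}.
Variable mu : {measure set T -> \bar R}.
Implicit Types f g : T -> R.

Lemma intRZr f k : mu.-integrable setT (EFin \o f) ->
  mu.-integrable setT (EFin \o (fun x => f x * k)).
Proof.
move=> h; apply: (eq_integrable measurableT _ _ _ (integrableZr measurableT k h)) => x _.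
by rewrite /= EFinM.
Qed.

Lemma intRZl f k : mu.-integrable setT (EFin \o f) ->
  mu.-integrable setT (EFin \o (fun x => k * f x)).
Proof.
move=> h; apply: (eq_integrable measurableT _ _ _ (integrableZl measurableT k h)) => x _.
by rewrite /= EFinM.
Qed.

Lemma intRD f g : mu.-integrable setT (EFin \o f) -> mu.-integrable setT (EFin \o g) ->
  mu.-integrable setT (EFin \o (fun x => f x + g x)).
Proof.
move=> h1 h2; apply: (eq_integrable measurableT _ _ _ (integrableD measurableT h1 h2)) => x _.
by rewrite /= EFinD.
Qed.

Lemma intRB f g : mu.-integrable setT (EFin \o f) -> mu.-integrable setT (EFin \o g) ->
  mu.-integrable setT (EFin \o (fun x => f x - g x)).
Proof.
move=> h1 h2; apply: (eq_integrable measurableT _ _ _ (integrableB measurableT h1 h2)) => x _.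
by rewrite /= EFinB.
Qed.

End intR.

Section muside.
Context {d2 : measure_display} {A : measurableType d2} {R : realType}.
Variable mu : {measure set A -> \bar R}.
Hypotheses (mu0 : (0 < mu setT)%E) (muoo : (mu setT < +oo)%E).

Let mT : R := fine (mu setT).
Let mT_gt0 : 0 < mT.
Proof. by rewrite /mT fine_gt0// mu0 muoo. Qed.

Lemma int_bnd (f : A -> R) M : measurable_fun setT f -> (forall a, `|f a| <= M) ->
  mu.-integrable setT (EFin \o f).
Proof.
move=> mf fM; apply: measurable_bounded_integrable => //.
exact: bnd_glob fM.
Qed.

Lemma int_expQ (q : A -> R) M : measurable_fun setT q -> (forall a, `|q a| <= M) ->
  mu.-integrable setT (EFin \o (fun a => expR (q a))).
Proof.
move=> mq qM; apply: (@int_bnd _ (expR M)).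
  exact: (measurableT_comp (@measurable_realfun.measurable_expR R) mq).
move=> a; rewrite gtr0_norm ?expR_gt0// ler_expR.
exact: le_trans (ler_norm _) (qM a).
Qed.

Lemma Rint_cst (c : R) : Rintegral mu setT (fun _ => c) = c * mT.
Proof. by rewrite Rintegral_cst. Qed.

Lemma Zbounds (q : A -> R) M : measurable_fun setT q -> (forall a, `|q a| <= M) ->
  expR (- M) * mT <= Rintegral mu setT (fun a => expR (q a)) <= expR M * mT.
Proof.
move=> mq qM; have iq := int_expQ mq qM.
have ic c : mu.-integrable setT (EFin \o (fun _ : A => c)).
  by apply: (@int_bnd _ `|c|) => // _; exact: measurable_cst.
rewrite -!Rint_cst; apply/andP; split; apply: le_Rintegral => // a _;
  rewrite ler_expR; move: (qM a); rewrite ler_norml => /andP[]//.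
Qed.

Lemma Z_gt0 (q : A -> R) M : measurable_fun setT q -> (forall a, `|q a| <= M) ->
  0 < Rintegral mu setT (fun a => expR (q a)).
Proof.
move=> mq qM; have /andP[+ _] := Zbounds mq qM.
by apply: lt_le_trans; rewrite mulr_gt0 ?expR_gt0.
Qed.


Let Z (q : A -> R) := Rintegral mu setT (fun a => expR (q a)).

Lemma Vbound (q : A -> R) M : measurable_fun setT q -> (forall a, `|q a| <= M) ->
  `|ln (Z q)| <= M + `|ln mT|.
Proof.
move=> mq qM; have /andP[h1 h2] := Zbounds mq qM.
have Zp : Z q \is Num.pos by rewrite posrE (Z_gt0 mq qM).
have e1 : ln (expR (- M) * mT) = - M + ln mT by rewrite lnM ?posrE ?expR_gt0// expRK.
have e2 : ln (expR M * mT) = M + ln mT by rewrite lnM ?posrE ?expR_gt0// expRK.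
have l1 : - M + ln mT <= ln (Z q).
  by rewrite -e1 ler_ln// posrE mulr_gt0 ?expR_gt0.
have l2 : ln (Z q) <= M + ln mT.
  by rewrite -e2 ler_ln// posrE mulr_gt0 ?expR_gt0.
rewrite ler_norml; apply/andP; split.
  by apply: le_trans l1; rewrite opprD lerD2l lerNl ler_normr lexx orbT.
by apply: (le_trans l2); rewrite lerD2l ler_norm.
Qed.

Lemma Vmono (q q' : A -> R) M M' c :
  measurable_fun setT q -> (forall a, `|q a| <= M) ->
  measurable_fun setT q' -> (forall a, `|q' a| <= M') ->
  (forall a, q a <= q' a + c) -> ln (Z q) <= ln (Z q') + c.
Proof.
move=> mq qM mq' qM' le.
have i1 := int_expQ mq qM; have i2 := int_expQ mq' qM'.
have Zp : Z q \is Num.pos by rewrite posrE (Z_gt0 mq qM).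
have Zp' : Z q' \is Num.pos by rewrite posrE (Z_gt0 mq' qM').
have -> : c = ln (expR c) by rewrite expRK.
have ep : expR c \is Num.pos by rewrite posrE expR_gt0.
have Zc : Z q' * expR c \is Num.pos by rewrite posrE mulr_gt0 -?posrE.
rewrite -lnM // ler_ln //.
rewrite /Z -RintegralZr//; apply: le_Rintegral => //; first exact: intRZr.
by move=> a _; rewrite /= -expRD ler_expR.
Qed.

Lemma expR_mid (x y : R) : expR ((x + y) / 2) <= (expR x + expR y) / 2.
Proof.
have ex : expR x = expR (x / 2) * expR (x / 2) by rewrite -expRD -splitr.
have ey : expR y = expR (y / 2) * expR (y / 2) by rewrite -expRD -splitr.
have exy : expR ((x + y) / 2) = expR (x / 2) * expR (y / 2) by rewrite -expRD mulrDl.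
rewrite ex ey exy; set X := expR (x / 2); set Y := expR (y / 2).
rewrite ler_pdivlMr// ; have := sqr_ge0 (X - Y); nra.
Qed.

Lemma VCS (q1 q2 : A -> R) M1 M2 :
  measurable_fun setT q1 -> (forall a, `|q1 a| <= M1) ->
  measurable_fun setT q2 -> (forall a, `|q2 a| <= M2) ->
  ln (Z (fun a => (q1 a + q2 a) / 2)) <= (ln (Z q1) + ln (Z q2)) / 2.
Proof.
move=> m1 b1 m2 b2.
have i1 := int_expQ m1 b1; have i2 := int_expQ m2 b2.
have Zp1 : Z q1 \is Num.pos by rewrite posrE (Z_gt0 m1 b1).
have Zp2 : Z q2 \is Num.pos by rewrite posrE (Z_gt0 m2 b2).
have mS : measurable_fun setT (fun a => (q1 a + q2 a) / 2).
  by apply: measurable_funM => //; apply: measurable_funD.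
have bS : forall a, `|(q1 a + q2 a) / 2| <= (M1 + M2) / 2.
  move=> a; rewrite normrM [`|2^-1|]ger0_norm ?invr_ge0// ler_pM2r ?invr_gt0//.
  by rewrite (le_trans (ler_normD _ _))// lerD.
have ZpS : Z (fun a => (q1 a + q2 a) / 2) \is Num.pos by rewrite posrE (Z_gt0 mS bS).
set V1 := ln (Z q1); set V2 := ln (Z q2); set w := (V2 - V1) / 2.
suff : Z (fun a => (q1 a + q2 a) / 2) <= expR ((V1 + V2) / 2).
  by move=> h; rewrite -[X in _ <= X]expRK ler_ln // posrE expR_gt0.
have e1 : Z q1 * expR w = expR ((V1 + V2) / 2).
  rewrite -[Z q1](lnK Zp1) -expRD -/V1; congr expR; rewrite /w.
  lra.
have e2 : Z q2 * expR (- w) = expR ((V1 + V2) / 2).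
  rewrite -[Z q2](lnK Zp2) -expRD -/V2; congr expR; rewrite /w.
  lra.
have -> : expR ((V1 + V2) / 2) = (Z q1 * expR w + Z q2 * expR (- w)) / 2.
  by rewrite e1 e2; lra.
rewrite /Z -RintegralZr// -RintegralZr// -RintegralD//; try exact: intRZr.
rewrite -RintegralZr//; last by apply: intRD; exact: intRZr.
apply: le_Rintegral => //; last first.
  move=> a _; rewrite -!expRD.
  have := expR_mid (q1 a + w) (q2 a + - w).
  by have -> : (q1 a + w + (q2 a + - w)) / 2 = (q1 a + q2 a) / 2 by field.
- by apply: intRZr; apply: intRD; exact: intRZr.
- exact: (int_expQ mS bS).
Qed.

End muside.

Section renyi.
Context {d1 d2 : measure_display} {S : measurableType d1} {A : measurableType d2} {R : realType}.
Variable mu : {measure set A -> \bar R}.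
Hypotheses (mu0 : (0 < mu setT)%E) (muoo : (mu setT < +oo)%E).

Lemma renyiE (Q1 Q2 : S -> A -> R) s M1 M2 :
  measurable_fun setT (Q1 s) -> (forall a, `|Q1 s a| <= M1) ->
  measurable_fun setT (Q2 s) -> (forall a, `|Q2 s a| <= M2) ->
  renyi_half mu (softpol mu Q1 s) (softpol mu Q2 s) =
  softV mu Q1 s + softV mu Q2 s - 2 * softV mu (fun s a => (Q1 s a + Q2 s a) / 2) s.
Proof.
move=> m1 b1 m2 b2.
have Zp1 : partZ mu Q1 s \is Num.pos by rewrite posrE (Z_gt0 mu0 muoo m1 b1).
have Zp2 : partZ mu Q2 s \is Num.pos by rewrite posrE (Z_gt0 mu0 muoo m2 b2).
have mS : measurable_fun setT (fun a => (Q1 s a + Q2 s a) / 2).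
  by apply: measurable_funM => //; apply: measurable_funD.
have bS : forall a, `|(Q1 s a + Q2 s a) / 2| <= (M1 + M2) / 2.
  move=> a; rewrite normrM [`|2^-1|]ger0_norm ?invr_ge0// ler_pM2r ?invr_gt0//.
  by rewrite (le_trans (ler_normD _ _))// lerD.
have ZpS : partZ mu (fun s a => (Q1 s a + Q2 s a) / 2) s \is Num.pos.
  by rewrite posrE (Z_gt0 mu0 muoo mS bS).
rewrite /renyi_half /softV /softpol.
set Z1 := partZ mu Q1 s; set Z2 := partZ mu Q2 s.
set ZS := partZ mu _ s.
set V1 := ln Z1; set V2 := ln Z2.
have -> : (fun a => Num.sqrt (expR (Q1 s a) / Z1 * (expR (Q2 s a) / Z2))) =
    (fun a => expR ((Q1 s a + Q2 s a) / 2) * expR (- ((V1 + V2) / 2))).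
  apply/funext => a.
  rewrite -[Z1](lnK Zp1) -[Z2](lnK Zp2) -/V1 -/V2 -!expRB -expRD.
  have -> : Q1 s a - V1 + (Q2 s a - V2) =
      (Q1 s a - V1 + (Q2 s a - V2)) / 2 + (Q1 s a - V1 + (Q2 s a - V2)) / 2 by lra.
  rewrite expRD -expr2 sqrtr_sqr ger0_norm ?expR_ge0// -expRD; congr expR; lra.
rewrite RintegralZr//; last exact: (int_expQ muoo mS bS).
rewrite -/ZS lnM ?posrE ?expR_gt0// expRK; lra.
Qed.

End renyi.

Section nuside.
Context {d1 d2 : measure_display} {S : measurableType d1} {A : measurableType d2} {R : realType}.
Variable nu : {measure set S -> \bar R}.
Variable p : S -> A -> S -> R.
Hypothesis hp : transition_density nu p.

Lemma p_meas s a : measurable_fun setT (p s a).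
Proof.
have [_ [mp _]] := hp.
exact: (measurable_fun_pair2 (s, a) mp).
Qed.

Lemma p_int s a : nu.-integrable setT (EFin \o p s a).
Proof.
have [p0 [_ p1]] := hp.
apply/integrableP; split; first exact/measurable_EFinP/p_meas.
rewrite (eq_integral (EFin \o p s a)); last by move=> x _ /=; rewrite ger0_norm.
by rewrite p1 ltry.
Qed.

Lemma p_Rint s a : Rintegral nu setT (p s a) = 1.
Proof. by have [_ [_ p1]] := hp; rewrite /Rintegral p1. Qed.

Lemma expect_int s a (f : S -> R) K : measurable_fun setT f -> (forall x, `|f x| <= K) ->
  nu.-integrable setT (EFin \o (fun s' => p s a s' * f s')).
Proof.
move=> mf fK.
apply: (eq_integrable measurableT _ _ _ (integrableMl measurableT (p_int s a) mf (bnd_glob fK))).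
by move=> x _; rewrite /= EFinM.
Qed.

Lemma expect_cst s a c : expect nu p s a (fun _ => c) = c.
Proof. by rewrite /expect RintegralZr ?p_Rint ?mul1r//; exact: p_int. Qed.

Lemma expectD s a (f g : S -> R) K1 K2 :
  measurable_fun setT f -> (forall x, `|f x| <= K1) ->
  measurable_fun setT g -> (forall x, `|g x| <= K2) ->
  expect nu p s a (fun x => f x + g x) = expect nu p s a f + expect nu p s a g.
Proof.
move=> mf bf mg bg; rewrite /expect -RintegralD //.
- by congr Rintegral; apply/funext => x; rewrite mulrDr.
- exact: expect_int mf bf.
- exact: expect_int mg bg.
Qed.

Lemma expect_lin s a (f g h : S -> R) K1 K2 K3 (al be de c : R) :
  measurable_fun setT f -> (forall x, `|f x| <= K1) ->
  measurable_fun setT g -> (forall x, `|g x| <= K2) ->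
  measurable_fun setT h -> (forall x, `|h x| <= K3) ->
  expect nu p s a (fun x => al * f x + be * g x + de * h x + c) =
  al * expect nu p s a f + be * expect nu p s a g + de * expect nu p s a h + c.
Proof.
move=> mf bf mg bg mh bh.
have i1 := expect_int s a mf bf; have i2 := expect_int s a mg bg.
have i3 := expect_int s a mh bh; have i0 := p_int s a.
rewrite /expect.
have -> : (fun x => p s a x * (al * f x + be * g x + de * h x + c)) =
  (fun x => p s a x * f x * al + p s a x * g x * be + p s a x * h x * de + p s a x * c).
  by apply/funext => x; ring.
rewrite !RintegralD //; try by repeat first [apply: intRD | apply: intRZr | assumption].
rewrite !RintegralZr // p_Rint; ring.
Qed.

Lemma expect_le_nm s a (g f : S -> R) K1 K2 :
  measurable_fun setT g -> (forall x, `|g x| <= K1) ->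
  (forall x, `|f x| <= K2) -> (forall x, g x <= f x) ->
  expect nu p s a g <= expect nu p s a f.
Proof.
have [p0 _] := hp.
move=> mg bg bf gf; rewrite /expect.
apply: (@Rintegral_le_nm _ _ _ nu _ _ (fun x => p s a x * K2)).
- exact: expect_int bg.
- exact: intRZr (p_int s a).
- by move=> x; rewrite ler_wpM2l.
- by move=> x; rewrite normrM ger0_norm// ler_wpM2l.
Qed.

End nuside.

Section Vmeas.
Context {d1 d2 : measure_display} {S : measurableType d1} {A : measurableType d2} {R : realType}.
Variable mu : {measure set A -> \bar R}.
Hypothesis muoo : (mu setT < +oo)%E.

Definition muF : set A -> \bar R := mu.
HB.instance Definition _ := Measure.copy muF mu.

Let muF_fin : fin_num_fun muF.
Proof.
move=> X mX; rewrite ge0_fin_numE ?measure_ge0//.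
by apply: le_lt_trans muoo; apply: le_measure; rewrite ?inE.
Qed.

HB.instance Definition _ := Measure_isFinite.Build _ _ _ muF muF_fin.

Lemma softV_meas (Q : S -> A -> R) : measurableSA Q -> measurable_fun setT (softV mu Q).
Proof.
move=> mQ.
have mE : measurable_fun setT (fun x : S * A => (expR (Q x.1 x.2))%:E).
  apply/measurable_EFinP; exact: (measurableT_comp (@measurable_expR R) mQ).
have := @measurable_fun_fubini_tonelli_F _ _ S A R muF _ mE (fun x => expR_ge0 _).
move=> h.
apply: (measurableT_comp (@measurable_ln R)).
exact: (measurableT_comp (fine_measurable measurableT) h).
Qed.

End Vmeas.

Section lin.
Context {d : measure_display} {T : measurableType d} {R : realType}.
Definition LF (al be de c : R) (f g h : T -> R) :=
  fun x => al * f x + be * g x + de * h x + c.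

Lemma LF_meas al be de c f g h : measurable_fun setT f -> measurable_fun setT g ->
  measurable_fun setT h -> measurable_fun setT (LF al be de c f g h).
Proof.
move=> mf mg mh; rewrite /LF.
repeat apply: measurable_funD.
all: try exact: measurable_cst.
all: by apply: measurable_funM => //; exact: measurable_cst.
Qed.

Lemma LF_bnd al be de c f g h K1 K2 K3 : (forall x, `|f x| <= K1) ->
  (forall x, `|g x| <= K2) -> (forall x, `|h x| <= K3) ->
  forall x, `|LF al be de c f g h x| <= `|al| * K1 + `|be| * K2 + `|de| * K3 + `|c|.
Proof.
move=> bf bg bh x; rewrite /LF.
apply: (le_trans (ler_normD _ _)); apply: lerD; last exact: lexx.
apply: (le_trans (ler_normD _ _)); apply: lerD; last by rewrite normrM ler_wpM2l.
by apply: (le_trans (ler_normD _ _)); apply: lerD; rewrite normrM ler_wpM2l.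
Qed.
End lin.

Lemma arithD {R : realType} (g a1 a2 y1 y2 y3 : R) :
  (a1 + a2) / 2 + g * y1 - (a1 + g * y2 + (a2 + g * y3)) / 2 =
  g * (1 * y1 + - (1 / 2) * y2 + - (1 / 2) * y3 + 0).
Proof. ring. Qed.

Lemma bk_arith {R : realType} (v1 v2 v3 v4 B1 B2 B3 B4 : R) :
  `|v1| <= B1 -> `|v2| <= B2 -> `|v3| <= B3 -> `|v4| <= B4 ->
  `|v1 + v2 - 2 * v3 + v4| <= B1 + B2 + 2 * B3 + B4.
Proof.
rewrite !ler_norml => /andP[h1 h2] /andP[h3 h4] /andP[h5 h6] /andP[h7 h8].
apply/andP; split; lra.
Qed.

Lemma u2_arith {R : realType} (v1 v2 vS vC c Ml : R) :
  vS <= (v1 + v2) / 2 -> vS <= vC + (c + Ml) ->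
  1 / 2 * v1 + 1 / 2 * v2 + -1 * vC + - Ml <= v1 + v2 - 2 * vS + c.
Proof. lra. Qed.

Lemma u2_fin {R : realType} (g z1 z2 z3 z4 Ml : R) : 0 < g ->
  1 / 2 * z1 + 1 / 2 * z2 + -1 * z3 + - Ml <= z4 ->
  g * ((z1 + z2) / 2 - z3 - z4) <= g * Ml.
Proof. move=> g0 h; rewrite ler_pM2l//; lra. Qed.

Lemma u1_arith {R : realType} (vC vS v1 v2 Mu : R) :
  vS <= (v1 + v2) / 2 -> vC <= vS + Mu ->
  1 * vC + - (1 / 2) * v1 + - (1 / 2) * v2 + 0 <= Mu.
Proof. lra. Qed.

Lemma fin_arith {R : realType} (vS vC c Ml : R) :
  Ml <= 0 -> vS <= vC + (c + Ml) -> vS - c <= vC.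
Proof. lra. Qed.

Lemma arithE {R : realType} (g a1 a2 y1 y2 yC yk : R) :
  (a1 + g * y1 + (a2 + g * y2)) / 2 - ((a1 + a2) / 2 + g * yC) - g * yk =
  g * ((y1 + y2) / 2 - yC - yk).
Proof. ring. Qed.

Section wrap.
Context {d1 d2 : measure_display} {S : measurableType d1} {A : measurableType d2} {R : realType}.
Variable mu : {measure set A -> \bar R}.
Hypotheses (mu0 : (0 < mu setT)%E) (muoo : (mu setT < +oo)%E).

Definition bndSA (Q : S -> A -> R) M := forall s a, `|Q s a| <= M.

Lemma secM (Q : S -> A -> R) : measurableSA Q -> forall x, measurable_fun setT (Q x).
Proof. by move=> mQ x; exact: (measurable_fun_pair2 x mQ). Qed.

Lemma VB (Q : S -> A -> R) M L : measurableSA Q -> bndSA Q M ->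
  L = `|ln (fine (mu setT))| -> forall x, `|softV mu Q x| <= M + L.
Proof. by move=> mQ bQ -> x; exact: (Vbound mu0 muoo (secM mQ x) (bQ x)). Qed.

Lemma VM (Q Q' : S -> A -> R) M M' c x : measurableSA Q -> bndSA Q M ->
  measurableSA Q' -> bndSA Q' M' -> (forall a, Q x a <= Q' x a + c) ->
  softV mu Q x <= softV mu Q' x + c.
Proof.
by move=> mQ bQ mQ' bQ' h; exact: (Vmono mu0 muoo (secM mQ x) (bQ x) (secM mQ' x) (bQ' x) h).
Qed.

Lemma QS_meas (Q1 Q2 : S -> A -> R) : measurableSA Q1 -> measurableSA Q2 ->
  measurableSA (fun s a => (Q1 s a + Q2 s a) / 2).
Proof.
move=> m1 m2; rewrite /measurableSA.
by apply: measurable_funM => //; apply: measurable_funD.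
Qed.

Lemma QS_bnd (Q1 Q2 : S -> A -> R) M1 M2 : bndSA Q1 M1 -> bndSA Q2 M2 ->
  bndSA (fun s a => (Q1 s a + Q2 s a) / 2) ((M1 + M2) / 2).
Proof.
move=> b1 b2 s a; rewrite normrM [`|2^-1|]ger0_norm ?invr_ge0// ler_pM2r ?invr_gt0//.
by rewrite (le_trans (ler_normD _ _))// lerD.
Qed.

Lemma VC (Q1 Q2 : S -> A -> R) M1 M2 x : measurableSA Q1 -> bndSA Q1 M1 ->
  measurableSA Q2 -> bndSA Q2 M2 ->
  softV mu (fun s a => (Q1 s a + Q2 s a) / 2) x <= (softV mu Q1 x + softV mu Q2 x) / 2.
Proof.
by move=> m1 b1 m2 b2; exact: (VCS mu0 muoo (secM m1 x) (b1 x) (secM m2 x) (b2 x)).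
Qed.

Lemma RE (Q1 Q2 : S -> A -> R) M1 M2 : measurableSA Q1 -> bndSA Q1 M1 ->
  measurableSA Q2 -> bndSA Q2 M2 ->
  (fun x => renyi_half mu (softpol mu Q1 x) (softpol mu Q2 x)) =
  (fun x => softV mu Q1 x + softV mu Q2 x - 2 * softV mu (fun s a => (Q1 s a + Q2 s a) / 2) x).
Proof.
move=> m1 b1 m2 b2; apply/funext => x.
exact: (renyiE mu0 muoo (secM m1 x) (b1 x) (secM m2 x) (b2 x)).
Qed.

End wrap.

Unset Implicit Arguments.

Theorem corollary1 (d1 d2 : measure_display) (S : measurableType d1)
  (A : measurableType d2) (R : realType)
  (mu : {measure set A -> \bar R}) (nu : {measure set S -> \bar R})
  (p : S -> A -> S -> R) (gamma : R)
  (r1 r2 Q1 Q2 QC C : S -> A -> R) :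
  (0 < mu setT)%E -> (mu setT < +oo)%E ->
  transition_density nu p ->
  0 < gamma < 1 ->
  boundedSA r1 -> measurableSA r1 ->
  boundedSA r2 -> measurableSA r2 ->
  is_opt_softQ mu nu p gamma r1 Q1 ->
  is_opt_softQ mu nu p gamma r2 Q2 ->
  is_opt_softQ mu nu p gamma (fun s a => (r1 s a + r2 s a) / 2) QC ->
  boundedSA C -> measurableSA C ->
  (forall s a, C s a = C_backup mu nu p gamma Q1 Q2 C s a) ->
  let QSigma := fun s a => (Q1 s a + Q2 s a) / 2 in
  forall s : S,
    softV mu QC s <= softV mu QSigma s /\
    softV mu QSigma s - sup (range (C s)) <= softV mu QC s.
Proof.
move=> mu0 muoo hp /andP[g0 g1] _ _ _ _ [[M1 b1] [m1 e1]] [[M2 b2] [m2 e2]]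
  [[MC bC'] [mC' eC']] [K bK] mK eK QSigma s.
have bS := QS_bnd b1 b2; have mS := QS_meas m1 m2.
rewrite -/QSigma in bS mS.
have [L Ldef] : exists L : R, L = `|ln (fine (mu setT))| by eexists.
have vb1 := VB mu0 muoo m1 b1 Ldef; have vb2 := VB mu0 muoo m2 b2 Ldef.
have vbC := VB mu0 muoo mC' bC' Ldef; have vbS := VB mu0 muoo mS bS Ldef.
have vm1 := softV_meas muoo m1; have vm2 := softV_meas muoo m2.
have vmC := softV_meas muoo mC'; have vmS := softV_meas muoo mS.
have [a0 _] : [set: A] !=set0.
  apply/set0P; apply/negP => /eqP h; move: mu0; rewrite h measure0.
  by rewrite ltxx.
pose D x := QC x.1 x.2 - QSigma x.1 x.2.
have bD : forall x, `|D x| <= MC + (M1 + M2) / 2.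
  move=> x; rewrite /D (le_trans (ler_normB _ _))// lerD//.
have hsD : has_sup (range D).
  split; first by exists (D (s, a0)), (s, a0).
  exists (MC + (M1 + M2) / 2) => _ [x _ <-].
  exact: le_trans (ler_norm _) (bD x).
set Mu := sup (range D).
have DMu x a : QC x a <= QSigma x a + Mu.
  have : D (x, a) <= Mu by apply: sup_upper_bound => //; exists (x, a).
  rewrite /D /=; lra.
have U1 x a : D (x, a) <= gamma * Mu.
  have eqD : D (x, a) = gamma * expect nu p x a
      (LF 1 (-(1/2)) (-(1/2)) 0 (softV mu QC) (softV mu Q1) (softV mu Q2)).
    rewrite /LF (expect_lin hp x a _ _ _ _ vmC vbC vm1 vb1 vm2 vb2).
    rewrite /D /= /QSigma eC' e1 e2 /soft_backup.
    exact: arithD.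
  rewrite eqD ler_pM2l//.
  rewrite -[X in _ <= X](expect_cst hp x a Mu).
  apply: (expect_le_nm hp x a (LF_meas _ _ _ _ vmC vm1 vm2) (LF_bnd _ _ _ _ vbC vb1 vb2)
    (fun _ => lexx `|Mu|)).
  move=> y; rewrite /LF.
  have h1 := VC mu0 muoo y m1 b1 m2 b2.
  have h2 := VM mu0 muoo (x := y) mC' bC' mS bS (DMu y).
  rewrite -/QSigma in h1.
  exact: u1_arith h1 h2.
have Mu0 : Mu <= 0.
  have : Mu <= gamma * Mu.
    apply: ge_sup; first by exists (D (s, a0)), (s, a0).
    by move=> _ [[x a] _ <-]; exact: U1.
  nra.
split.
  rewrite -[X in _ <= X]addr0; apply: (VM mu0 muoo mC' bC' mS bS) => a.
  have := DMu s a; lra.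
have hsC y : has_sup (range (C y)).
  split; first by exists (C y a0), a0.
  exists K => _ [a _ <-]; exact: le_trans (ler_norm _) (bK y a).
have Cle y a : C y a <= sup (range (C y)).
  by apply: sup_upper_bound => //; exists a.
have supCb y : `|sup (range (C y))| <= K.
  rewrite ler_norml; apply/andP; split.
    apply: le_trans (Cle y a0); move: (bK y a0); rewrite ler_norml => /andP[] //.
  apply: ge_sup; first by exists (C y a0), a0.
  by move=> _ [a _ <-]; move: (bK y a); rewrite ler_norml => /andP[].
pose E x := QSigma x.1 x.2 - QC x.1 x.2 - C x.1 x.2.
have bE : forall x, `|E x| <= (M1 + M2) / 2 + MC + K.
  move=> x; rewrite /E; move: (bS x.1 x.2) (bC' x.1 x.2) (bK x.1 x.2).
  rewrite !ler_norml => /andP[h1 h2] /andP[h3 h4] /andP[h5 h6].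
  apply/andP; split; clear -h1 h2 h3 h4 h5 h6; lra.
have hsE : has_sup (range E).
  split; first by exists (E (s, a0)), (s, a0).
  exists ((M1 + M2) / 2 + MC + K) => _ [x _ <-].
  exact: le_trans (ler_norm _) (bE x).
set Ml := sup (range E).
have EMl y a : QSigma y a <= QC y a + (sup (range (C y)) + Ml).
  have : E (y, a) <= Ml by apply: sup_upper_bound => //; exists (y, a).
  have := Cle y a; rewrite /E /= => h1 h2; clear -h1 h2; lra.
have [k kdef] : exists k : S -> R, forall y,
    k y = softV mu Q1 y + softV mu Q2 y - 2 * softV mu QSigma y + sup (range (C y)).
  by eexists => y; reflexivity.
have bk : forall y, `|k y| <= (M1 + L) + (M2 + L) + 2 * ((M1 + M2) / 2 + L) + K.
  by move=> y; rewrite kdef; exact: bk_arith (vb1 y) (vb2 y) (vbS y) (supCb y).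
have kE x a : C x a = gamma * expect nu p x a k.
  rewrite eK /C_backup; congr (_ * expect _ _ _ _ _); apply/funext => y.
  by rewrite kdef (renyiE mu0 muoo (secM m1 y) (b1 y) (secM m2 y) (b2 y)).
have U2 x a : E (x, a) <= gamma * Ml.
  have eqE : E (x, a) = gamma * ((expect nu p x a (softV mu Q1) +
      expect nu p x a (softV mu Q2)) / 2 - expect nu p x a (softV mu QC)
      - expect nu p x a k).
    rewrite /E /= /QSigma kE eC' e1 e2 /soft_backup.
    exact: arithE.
  have Eg : expect nu p x a (LF (1/2) (1/2) (-1) (- Ml) (softV mu Q1) (softV mu Q2) (softV mu QC))
      <= expect nu p x a k.
    apply: (expect_le_nm hp x a (LF_meas _ _ _ _ vm1 vm2 vmC) (LF_bnd _ _ _ _ vb1 vb2 vbC) bk).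
    move=> y; rewrite /LF kdef.
    have h1 := VC mu0 muoo y m1 b1 m2 b2.
    have h2 := VM mu0 muoo (x := y) mS bS mC' bC' (EMl y).
    rewrite -/QSigma in h1.
    exact: u2_arith h1 h2.
  have EL := expect_lin hp x a (1/2) (1/2) (-1) (- Ml) vm1 vb1 vm2 vb2 vmC vbC.
  rewrite /LF in Eg; rewrite EL in Eg; rewrite eqE.
  exact: u2_fin g0 Eg.
have Ml0 : Ml <= 0.
  have : Ml <= gamma * Ml.
    apply: ge_sup; first by exists (E (s, a0)), (s, a0).
    by move=> _ [[x a] _ <-]; exact: U2.
  nra.
have := VM mu0 muoo (x := s) mS bS mC' bC' (EMl s).
exact: fin_arith Ml0.
Qed.
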